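(* Let $Z=\prod_{c=1}^C Z_c$ with each $Z_c$ finite and let $Z^{\text{train}}\subseteq Z$ be a training set with targets $y\in\mathbb{R}^{|Z^{\text{train}}|}$. For each $J\subseteq\{1,\dots,C\}$ and each value $z_J=(z_c)_{c\in J}$, let $x_J[z_J]\in\mathbb{R}^d$ be a random vector with i.i.d. $\mathcal{N}(0,\sigma_k^2)$ entries, $\sigma_k^2>0$, $k=|J|$, all these vectors being sampled independently of each other, and represent $z\in Z$ by $x(z)=\sum_{J\subseteq\{1,\dots,C\}}x_J[z_J]$. Let $X$ be the matrix whose rows are $x(z)$, $z\in Z^{\text{train}}$, let $K=XX^T$, $a=K^{-1}y$, and define the kernel regression estimator $f(\tilde z)=a^TXx(\tilde z)$. Then for each test input $\tilde z\in Z\setminus Z^{\text{train}}$, the expectation $\mathbb{E}[f(\tilde z)]$ (over the random representation) is conjunction-wise additive: there exist functions $g_J:\prod_{c\in J}Z_c\to\mathbb{R}$ such that $$\mathbb{E}[f(\tilde z)]=\sum_{J\in\mathrm{Conj}(\tilde z\mid Z^{\text{train}})} g_J(\tilde z_J).$$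
   Context: $\mathrm{Conj}(z\mid Z^{\text{train}}):=\{J\subseteq\{1,\dots,C\}:\ \exists z^{\text{tr}}\in Z^{\text{train}}\ \text{with}\ z_c=z^{\text{tr}}_c\ \forall c\in J\}$, and $z_J:=(z_c)_{c\in J}$. A function of $z$ is called conjunction-wise additive (relative to $Z^{\text{train}}$) if it can be written as a sum over $J\in\mathrm{Conj}(z\mid Z^{\text{train}})$ of functions depending only on $z_J$. *)

(* Defs.v *)
From HB Require Import structures.
From mathcomp Require Import all_boot all_order all_algebra.
From mathcomp Require Import all_classical all_reals all_analysis.
Set Implicit Arguments. Unset Strict Implicit. Unset Printing Implicit Defensive.
Import Order.TTheory GRing.Theory Num.Theory.
Local Open Scope classical_set_scope.
Local Open Scope ring_scope.

Definition inputs (C : nat) (Zc : 'I_C -> finType) : finType :=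
  {dffun forall c : 'I_C, Zc c}.

(* Partial assignments: w c = Some v for c in J = support, None elsewhere.
   A value z_J = (z_c)_{c in J} of a conjunction J is encoded by the partial
   assignment with support J (J is recovered as the support). *)
Definition partial (C : nat) (Zc : 'I_C -> finType) : finType :=
  {dffun forall c : 'I_C, option (Zc c)}.

Definition assign_support (C : nat) (Zc : 'I_C -> finType) (w : partial Zc) : {set 'I_C} :=
  [set c | w c != None].

Definition restr (C : nat) (Zc : 'I_C -> finType) (J : {set 'I_C}) (z : inputs Zc)
  : partial Zc :=
  [ffun c => if c \in J then Some (z c) else None].

Definition Conj (C : nat) (Zc : 'I_C -> finType) (Ztr : {set inputs Zc}) (z : inputs Zc)
  : {set {set 'I_C}} :=
  [set J : {set 'I_C} | [exists ztr in Ztr, [forall c in J, ztr c == z c]]].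

Definition mutually_independent d (T : measurableType d) (R : realType)
  (P : probability T R) (I : finType) (X : I -> T -> R) : Prop :=
  forall B : I -> set R, (forall i, measurable (B i)) ->
    P [set t | forall i, B i (X i t)] = (\prod_(i : I) P (X i @^-1` B i))%E.

Definition xrep d (T : measurableType d) (R : realType) (P : probability T R)
  (C : nat) (Zc : 'I_C -> finType) (dim : nat)
  (x : partial Zc -> 'I_dim -> {RV P >-> R}) (z : inputs Zc) (t : T) : 'rV[R]_dim :=
  \row_(j < dim) \sum_(J : {set 'I_C}) x (restr J z) j t.

Definition Xmat d (T : measurableType d) (R : realType) (P : probability T R)
  (C : nat) (Zc : 'I_C -> finType) (dim : nat)
  (x : partial Zc -> 'I_dim -> {RV P >-> R}) (Ztr : {set inputs Zc}) (t : T)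
  : 'M[R]_(#|Ztr|, dim) :=
  \matrix_(i < #|Ztr|, j < dim) xrep x (enum_val i) t 0 j.

Definition Kmat d (T : measurableType d) (R : realType) (P : probability T R)
  (C : nat) (Zc : 'I_C -> finType) (dim : nat)
  (x : partial Zc -> 'I_dim -> {RV P >-> R}) (Ztr : {set inputs Zc}) (t : T)
  : 'M[R]_#|Ztr| :=
  Xmat x Ztr t *m (Xmat x Ztr t)^T.

Definition acoef d (T : measurableType d) (R : realType) (P : probability T R)
  (C : nat) (Zc : 'I_C -> finType) (dim : nat)
  (x : partial Zc -> 'I_dim -> {RV P >-> R}) (Ztr : {set inputs Zc})
  (y : 'cV[R]_#|Ztr|) (t : T) : 'cV[R]_#|Ztr| :=
  invmx (Kmat x Ztr t) *m y.

Definition kr_estimator d (T : measurableType d) (R : realType) (P : probability T R)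
  (C : nat) (Zc : 'I_C -> finType) (dim : nat)
  (x : partial Zc -> 'I_dim -> {RV P >-> R}) (Ztr : {set inputs Zc})
  (y : 'cV[R]_#|Ztr|) (zt : inputs Zc) (t : T) : R :=
  ((acoef x y t)^T *m Xmat x Ztr t *m (xrep x zt t)^T) 0 0.

Definition kr_term d (T : measurableType d) (R : realType) (P : probability T R)
  (C : nat) (Zc : 'I_C -> finType) (dim : nat)
  (x : partial Zc -> 'I_dim -> {RV P >-> R}) (Ztr : {set inputs Zc})
  (y : 'cV[R]_#|Ztr|) (w : partial Zc) (t : T) : R :=
  ((acoef x y t)^T *m Xmat x Ztr t *m (\col_(j < dim) x w j t)) 0 0.

(* Main.v *)
Require Import Defs.
From HB Require Import structures.
From mathcomp Require Import all_boot all_order all_algebra.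
From mathcomp Require Import all_classical all_reals all_analysis.
Import Order.TTheory GRing.Theory Num.Theory.
Local Open Scope classical_set_scope.
Local Open Scope ring_scope.
From mathcomp Require Import lra.
From mathcomp Require Import measurable_realfun.


Section Vec.
Variables (R : realType) (I : finType).
Definition vec := I -> R.
HB.instance Definition _ := gen_eqMixin vec.
HB.instance Definition _ := gen_choiceMixin vec.
HB.instance Definition _ := isPointed.Build vec (fun _ => 0).
Definition rect (B : I -> set R) : set vec := [set v | forall i, B i (v i)].
Definition Gen : set (set vec) :=
  [set A | exists B : I -> set R, (forall i, measurable (B i)) /\ A = rect B].
Local Notation SS := (g_sigma_algebraType Gen).

Lemma Gen_meas (A : set SS) : Gen A -> measurable A.
Proof. by move=> GA; apply: sub_sigma_algebra. Qed.

Lemma proj_meas (i : I) : measurable_fun setT (fun v : SS => v i).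
Proof.
move=> _ B mB; rewrite setTI; apply: Gen_meas.
exists (fun k => if k == i then B else setT); split.
  by move=> k; case: ifP.
apply/seteqP; split=> v /=.
  by move=> Bv k; case: eqP => [->|].
by move=> /(_ i); rewrite eqxx.
Qed.

Lemma GenI : setI_closed Gen.
Proof.
move=> _ _ [B [mB ->]] [B' [mB' ->]].
exists (fun i => B i `&` B' i); split; first by move=> i; exact: measurableI.
by apply/seteqP; split=> v /=; [move=> [h1 h2] i; split|move=> h; split=> i; case: (h i)].
Qed.

Variable flipset : pred I.
Definition flip (v : SS) : SS := fun i => if flipset i then - v i else v i.

Lemma flip_meas : measurable_fun setT flip.
Proof.
apply: (@measurability _ _ SS SS setT flip Gen) => //.
move=> _ [_ [B [mB ->]] <-]; apply: Gen_meas.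
exists (fun i => if flipset i then -%R @^-1` B i else B i); split.
  move=> i; case: ifP => _ //.
  by rewrite -[X in measurable X]setTI; apply: measurable_realfun.oppr_measurable.
apply/seteqP; split=> v /=.
  by move=> [_ h] i; move: (h i); rewrite /flip; case: ifP.
by move=> h; split=> // i; move: (h i); rewrite /flip; case: ifP.
Qed.

End Vec.
Notation SS R I := (g_sigma_algebraType (Gen R I)).
Arguments flip {R I} flipset v.
Arguments flip_meas {R I} flipset.
Arguments proj_meas {R I} i.

Section Sym.
Local Open Scope ereal_scope.
Context (R : realType) d (T : measurableType d) (P : probability T R) (I : finType)
  (X : I -> T -> R).
Hypothesis mX : forall i, measurable_fun setT (X i).
Hypothesis indep : forall B : I -> set R, (forall i, measurable (B i)) ->
  P [set t | forall i, B i (X i t)] = \prod_(i : I) P (X i @^-1` B i).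
Variable flipset : pred I.
Hypothesis symX : forall i, flipset i -> forall A : set R, measurable A ->
  P (X i @^-1` (-%R @^-1` A)) = P (X i @^-1` A).

Definition V (t : T) : SS R I := fun i => X i t.

Lemma mV : measurable_fun setT V.
Proof.
apply: (@measurability _ _ T (SS R I) setT V (@Gen R I)) => //.
move=> _ [_ [B [mB ->]] <-].
rewrite (_ : _ `&` _ = \bigcap_(i in setT) (X i @^-1` B i)).
  apply: fin_bigcap_measurable; first exact: finite_finset.
  by move=> i _; rewrite -[X in measurable X]setTI; apply: mX.
by apply/seteqP; split=> t /=; [move=> [_ h] i _; exact: h|move=> h; split=> // i; exact: h].
Qed.

Definition V' (t : T) : SS R I := flip flipset (V t).

Lemma mV' : measurable_fun setT V'.
Proof. exact: measurableT_comp (flip_meas flipset) mV. Qed.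

Lemma pushEq (A : set (SS R I)) : measurable A -> P (V @^-1` A) = P (V' @^-1` A).
Proof.
move=> mA.
have := (@measure_unique _ R (SS R I) (@Gen R I) (fun=> setT) erefl (@GenI R I)).
move=> /(_ _ _ (pushforward P V) (pushforward P V')).
apply => //.
- move=> _; rewrite /Gen /=; exists (fun=> setT); split => //.
  by apply/seteqP; split.
- by rewrite bigcup_const.
- exact: mV.
- exact: mV'.
- move=> h1 h2 _ [B [mB ->]].
  rewrite /pushforward /=.
  transitivity (P [set t | forall i, B i (X i t)]); first by [].
  transitivity (P [set t | forall i, (if flipset i then -%R @^-1` B i else B i) (X i t)]); last first.
    by congr (P _); apply/seteqP; split=> t /= h i; move: (h i); rewrite /V' /flip /V; case: ifP.
  rewrite (indep _ mB) (@indep (fun i => if flipset i then -%R @^-1` B i else B i)); last first.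
    move=> i; case: ifP => _ //.
    by rewrite -[X in measurable X]setTI; apply: measurable_realfun.oppr_measurable.
  apply: eq_bigr => i _; case: ifP => // fi.
  by rewrite symX.
- move=> h1 _; rewrite /pushforward.
  apply: (le_lt_trans (probability_le1 _ _)); last by rewrite ltry.
  by move: (h1 measurableT _ measurableT); rewrite setTI.
Qed.

Lemma sym_zero (F : SS R I -> R) : measurable_fun setT F ->
  (forall v, F (flip flipset v) = (- F v)%R) ->
  P.-integrable setT (fun t => (F (V t))%:E) ->
  \int[P]_t (F (V t))%:E = 0.
Proof.
move=> mF Fflip intF.
have mFE : measurable_fun setT (EFin \o F : SS R I -> \bar R) by apply/measurable_EFinP.
have h1 := integral_pushforward mV (mu := P) mFE intF measurableT.
have intF' : P.-integrable (V' @^-1` setT) ((EFin \o F) \o V').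
  have eT : V' @^-1` [set: SS R I] = [set: T] by [].
  rewrite eT.
  apply: (eq_integrable _ (fun t => (-1)%:E * (F (V t))%:E)) => //.
    by move=> t _; rewrite /= /V' Fflip EFinN mulN1e.
  exact: integrableZl.
have h2 := integral_pushforward mV' (mu := P) mFE intF' measurableT.
have e : \int[measure_function_pushforward__canonical__measure_function_Measure P mV]_(y in setT) (EFin \o F) y =
         \int[measure_function_pushforward__canonical__measure_function_Measure P mV']_(y in setT) (EFin \o F) y.
  apply: eq_measure_integral => A mA AT.
  exact: pushEq.
move: e; rewrite h1 h2 /=.
have -> : \int[P]_(x in V' @^-1` setT) (F (V' x))%:E = \int[P]_(x in setT) ((-1)%:E * (F (V x))%:E).
  by apply: eq_integral => t _; rewrite /V' Fflip EFinN mulN1e.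
rewrite integralZl //.
have := integrable_fin_num measurableT intF.
rewrite (_ : V @^-1` setT = setT) //.
case: (\int[P]_(x in setT) (F (V x))%:E) => //= r _.
move=> /eqP; rewrite -EFinM eqe => /eqP h.
by congr EFin; lra.
Qed.

End Sym.


Lemma normal_pdfN (R : realType) (s x : R) : s != 0 -> normal_pdf 0 s (- x) = normal_pdf 0 s x.
Proof. by move=> s0; rewrite /normal_pdf (negbTE s0) /normal_fun !subr0 sqrrN. Qed.

Lemma normal_probN (R : realType) (s : R) (A : set R) : s != 0 -> measurable A ->
  normal_prob 0 s (-%R @^-1` A) = normal_prob 0 s A.
Proof.
move=> s0 mA.
have mN : measurable_fun (setT : set (measurableTypeR R)) (-%R : measurableTypeR R -> measurableTypeR R) by exact: measurable_realfun.oppr_measurable.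
have mf : measurable_fun (A : set (measurableTypeR R)) (fun x => (normal_pdf 0 s x)%:E).
  by apply/measurable_EFinP; apply: measurable_funTS; exact: measurable_normal_pdf.
have h := ge0_integral_pushforward mN lebesgue_measure mA mf.
rewrite /normal_prob.
have -> : (\int[lebesgue_measure]_(x in -%R @^-1` A) (normal_pdf 0 s x)%:E)%E =
   (\int[lebesgue_measure]_(x in -%R @^-1` A) ((fun x => (normal_pdf 0 s x)%:E) \o -%R) x)%E.
  by apply: eq_integral => x _; rewrite /= normal_pdfN.
rewrite -h; last by move=> y _; rewrite lee_fin normal_pdf_ge0.
apply: eq_measure_integral => B mB BA /=.
by rewrite lebesgue_measureN.
Qed.


Set Implicit Arguments.
Unset Strict Implicit.
Section MatMeas.
Context (R : realType) d (S : measurableType d).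

Lemma inv_meas : measurable_fun setT (GRing.inv : R -> R).
Proof.
rewrite (_ : GRing.inv = fun x : R => if x == 0 then 0 else x^-1); last first.
  by apply/funext => x; case: eqP => // ->; rewrite invr0.
apply: measurable_fun_if => //.
- by apply: measurable_fun_eqr; [exact: measurable_id|exact: measurable_cst].
- rewrite setTI (_ : _ @^-1` _ = [set x : R | x != 0]); last first.
    by apply/seteqP; split=> x /=; case: eqP.
  apply: open_continuous_measurable_fun.
    exact: open_neq.
  by move=> x /set_mem /= x0; exact: inv_continuous.
Qed.

Definition mm m n (M : S -> 'M[R]_(m, n)) :=
  forall i j, measurable_fun setT (fun v => M v i j).
Arguments mm {m n}.

Lemma mm_mul m n p (A : S -> 'M[R]_(m, n)) (B : S -> 'M[R]_(n, p)) :
  mm A -> mm B -> mm (fun v => A v *m B v).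
Proof.
move=> mA mB i j; under eq_fun do rewrite mxE.
by apply: measurable_sum => k; apply: measurable_funM.
Qed.

Lemma mm_tr m n (A : S -> 'M[R]_(m, n)) : mm A -> mm (fun v => (A v)^T).
Proof. by move=> mA i j; under eq_fun do rewrite mxE; exact: mA. Qed.

Lemma mm_cst m n (A : 'M[R]_(m, n)) : mm (fun _ => A).
Proof. by move=> i j; exact: measurable_cst. Qed.

Lemma det_meas n (A : S -> 'M[R]_n) : mm A -> measurable_fun setT (fun v => \det (A v)).
Proof.
move=> mA; rewrite /determinant.
apply: measurable_sum => s; apply: measurable_funM; first exact: measurable_cst.
by apply: measurable_prod => i _.
Qed.

Lemma mm_minor n (A : S -> 'M[R]_n.+1) i j : mm A -> mm (fun v => row' i (col' j (A v))).
Proof. by move=> mA k l; under eq_fun do rewrite !mxE; exact: mA. Qed.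

Lemma mm_adj n (A : S -> 'M[R]_n) : mm A -> mm (fun v => \adj (A v)).
Proof.
case: n A => [|n] A mA i j.
  by case: i.
under eq_fun do rewrite mxE /cofactor.
apply: measurable_funM; first exact: measurable_cst.
by apply: det_meas; apply: mm_minor.
Qed.

Lemma mm_inv n (A : S -> 'M[R]_n) : mm A -> mm (fun v => invmx (A v)).
Proof.
move=> mA i j.
rewrite (_ : (fun v => _) = fun v => if \det (A v) == 0 then A v i j
            else (\det (A v))^-1 * \adj (A v) i j); last first.
  apply/funext => v; rewrite /invmx unitmxE unitfE.
  by case: eqP => _ //=; rewrite mxE.
apply: measurable_fun_if => //.
- by apply: measurable_fun_eqr; [exact: det_meas|exact: measurable_cst].
- exact: measurable_funS (mA i j).
- apply: measurable_funS (_ : measurable_fun setT _) => //.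
  apply: measurable_funM; last exact: mm_adj.
  apply: measurableT_comp; [exact: inv_meas|exact: det_meas].
Qed.
End MatMeas.

Unset Implicit Arguments.
Set Strict Implicit.


Section Pure.
Context (R : realType) (C : nat) (Zc : 'I_C -> finType) (dim : nat)
  (Ztr : {set inputs Zc}) (y : 'cV[R]_#|Ztr|).

Definition xrepv (v : partial Zc -> 'I_dim -> R) (z : inputs Zc) : 'rV[R]_dim :=
  \row_(j < dim) \sum_(J : {set 'I_C}) v (restr J z) j.
Definition Xmatv v : 'M[R]_(#|Ztr|, dim) :=
  \matrix_(i < #|Ztr|, j < dim) xrepv v (enum_val i) 0 j.
Definition Kmatv v := Xmatv v *m (Xmatv v)^T.
Definition acoefv v := invmx (Kmatv v) *m y.
Definition kr_termv v (w : partial Zc) : R :=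
  ((acoefv v)^T *m Xmatv v *m (\col_(j < dim) v w j)) 0 0.

Lemma kr_termE d (T : measurableType d) (P : probability T R)
  (x : partial Zc -> 'I_dim -> {RV P >-> R}) w t :
  kr_term x y w t = kr_termv (fun w j => x w j t) w.
Proof. by []. Qed.

Local Notation II := (partial Zc * 'I_dim)%type.
Definition vv (u : SS R II) : partial Zc -> 'I_dim -> R := fun w j => u (w, j).

Lemma G_meas w : measurable_fun setT (fun u : SS R II => kr_termv (vv u) w).
Proof.
have mX : mm (fun u : SS R II => Xmatv (vv u)).
  move=> i j; under eq_fun do rewrite !mxE.
  by apply: measurable_sum => J; exact: (proj_meas (restr J (enum_val i), j)).
have mc : mm (fun u : SS R II => \col_(j < dim) vv u w j).
  by move=> i j; under eq_fun do rewrite mxE; exact: (proj_meas (w, i)).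
rewrite /kr_termv /acoefv /Kmatv.
have my : mm (fun _ : SS R II => y) by move=> i j; exact: measurable_cst.
exact: (mm_mul (mm_mul (mm_tr (mm_mul (mm_inv (mm_mul mX (mm_tr mX))) my)) mX) mc 0 0).
Qed.

Lemma G_flip w (unseen : forall (i : 'I_#|Ztr|) J, restr J (enum_val i) != w) (u : SS R II) :
  kr_termv (vv (flip (fun i : II => i.1 == w) u)) w = - kr_termv (vv u) w.
Proof.
have eX : Xmatv (vv (flip (fun i : II => i.1 == w) u)) = Xmatv (vv u).
  apply/matrixP => i j; rewrite !mxE; apply: eq_bigr => J _.
  by rewrite /vv /flip /= (negbTE (unseen i J)).
have ec : \col_j vv (flip (fun i : II => i.1 == w) u) w j = - \col_j vv u w j.
  by apply/matrixP => i j; rewrite !mxE /vv /flip /= eqxx.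
rewrite /kr_termv /acoefv /Kmatv eX ec mulmxN.
by rewrite [LHS]mxE.
Qed.

Lemma restr_unseen (zt : inputs Zc) J0 : J0 \notin Conj Ztr zt ->
  forall (i : 'I_#|Ztr|) J, restr J (enum_val i) != restr J0 zt.
Proof.
move=> nJ0 i J; apply/eqP => e.
have eJ : J = J0.
  apply/setP => c; have := congr1 (fun f : partial Zc => f c) e; rewrite !ffunE.
  by case: (c \in J); case: (c \in J0).
subst J.
apply: (negP nJ0); rewrite inE; apply/existsP; exists (enum_val i).
rewrite enum_valP /=; apply/forallP => c; apply/implyP => cJ.
have := congr1 (fun f : partial Zc => f c) e; rewrite !ffunE cJ; case=> ->.
by [].
Qed.

End Pure.


Theorem proposition3 (R : realType) (dT : measure_display) (T : measurableType dT)
  (P : probability T R) (C : nat) (Zc : 'I_C -> finType) (dim : nat)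
  (sigma : nat -> R) (x : partial Zc -> 'I_dim -> {RV P >-> R})
  (Ztr : {set inputs Zc}) (y : 'cV[R]_#|Ztr|) :
  (forall k, 0 < sigma k) ->
  (forall (w : partial Zc) (j : 'I_dim) (A : set R), measurable A ->
     distribution P (x w j) A = normal_prob 0 (sigma #|assign_support w|) A) ->
  mutually_independent P (fun wj : partial Zc * 'I_dim => (x wj.1 wj.2 : T -> R)) ->
  P [set t | Kmat x Ztr t \in unitmx] = 1%E ->
  (forall w : partial Zc, P.-integrable setT (fun t => (kr_term x y w t)%:E)) ->
  exists g : partial Zc -> R,
    forall zt : inputs Zc, zt \notin Ztr ->
      ('E_P[kr_estimator x y zt])%E = ((\sum_(J in Conj Ztr zt) g (restr J zt))%:E)%E.
Proof.
move=> hsig hdist hind _ hint.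
exists (fun w => fine ('E_P[kr_term x y w])%E).
move=> zt ztN.
pose X := fun i : (partial Zc * 'I_dim)%type => (x i.1 i.2 : T -> R).
have mX : forall i, measurable_fun setT (X i) by move=> i; exact: measurable_funP.
have symX : forall (fs : pred (partial Zc * 'I_dim)%type) i, fs i ->
    forall A : set R, measurable A -> P (X i @^-1` (-%R @^-1` A)) = P (X i @^-1` A).
  move=> fs i _ A mA.
  have mNA : measurable (-%R @^-1` A).
    by rewrite -[X in measurable X]setTI; apply: measurable_realfun.oppr_measurable.
  have h1 := hdist i.1 i.2 _ mA.
  have h2 := hdist i.1 i.2 _ mNA.
  move: h1 h2; rewrite /distribution /pushforward /= => -> ->.
  by apply: normal_probN => //; rewrite gt_eqF.
have zero : forall J, J \notin Conj Ztr zt -> ('E_P[kr_term x y (restr J zt)])%E = 0%E.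
  move=> J nJ; rewrite unlock.
  exact (sym_zero R dT T P _ X mX hind (fun i => i.1 == restr J zt) (symX _)
    (fun u => kr_termv R C Zc dim Ztr y (vv R C Zc dim u) (restr J zt))
    (G_meas R C Zc dim Ztr y _) (G_flip R C Zc dim Ztr y _ (restr_unseen C Zc Ztr zt J nJ))
    (hint _)).
have dec t : kr_estimator x y zt t = \sum_(J : {set 'I_C}) kr_term x y (restr J zt) t.
  rewrite /kr_estimator /kr_term.
  have -> : (xrep x zt t)^T = \sum_(J : {set 'I_C}) \col_(j < dim) x (restr J zt) j t.
    by apply/matrixP => i k; rewrite !mxE summxE; apply: eq_bigr => J _; rewrite !mxE.
  by rewrite mulmx_sumr summxE.
have -> : ('E_P[kr_estimator x y zt])%E = (\sum_(J : {set 'I_C}) 'E_P[kr_term x y (restr J zt)])%E.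
  rewrite unlock.
  under eq_integral do rewrite dec -sumEFin.
  by rewrite integral_sum.
rewrite (bigID (fun J => J \in Conj Ztr zt)) /=.
rewrite [X in (_ + X)%E]big1 ?adde0; last by move=> J nJ; exact: zero.
rewrite -sumEFin; apply: eq_bigr => J _.
rewrite fineK //.
rewrite unlock; exact: integrable_fin_num.
Qed.
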